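(* Let $\mathcal{M}\subset\mathbb{R}^n$ be a symmetric real algebraic variety, i.e. $\mathcal{M}=\{x\in\mathbb{R}^n:p(x)=0\}$ for some real polynomial $p$, and $\sigma\mathcal{M}=\mathcal{M}$ for every permutation $\sigma$ of the coordinates. Then $\lambda^{-1}(\mathcal{M})=\{X\in\mathbf{S}^n:\lambda(X)\in\mathcal{M}\}$ is an algebraic variety of $\mathbf{S}^n$, i.e. the zero set of a polynomial in the entries of $X$.
   Context: $\mathbf{S}^n$ is the space of real symmetric $n\times n$ matrices; $\lambda(X)\in\mathbb{R}^n$ is the vector of eigenvalues of $X$ counted with multiplicity and ordered nonincreasingly. Permutations act on $\mathbb{R}^n$ by permuting coordinates: $(\sigma x)_i=x_{\sigma^{-1}(i)}$. *)

(* Defs.v *)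
From HB Require Import structures.
From mathcomp Require Import all_boot all_order all_algebra all_fingroup.
From mathcomp Require Import mpoly.
From mathcomp Require Import reals.
From Stdlib Require Import ClassicalEpsilon.
Set Implicit Arguments. Unset Strict Implicit. Unset Printing Implicit Defensive.
Import Order.TTheory GRing.Theory Num.Theory.
Local Open Scope ring_scope.

Definition symmx (R : realType) (n : nat) (X : 'M[R]_n) : Prop := X^T = X.

Definition is_eigvals (R : realType) (n : nat) (X : 'M[R]_n) (l : 'I_n -> R) : Prop :=
  char_poly X = \prod_(i < n) ('X - (l i)%:P) /\
  (forall i j : 'I_n, (i <= j)%N -> l j <= l i).

(* lambda(X) : the nonincreasingly ordered eigenvalue vector (well defined for
   symmetric X; an arbitrary value otherwise). *)
Definition eigvals (R : realType) (n : nat) (X : 'M[R]_n) : 'I_n -> R :=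
  epsilon (inhabits (fun _ => 0)) (is_eigvals X).

Definition perm_act (R : realType) (n : nat) (s : 'S_n) (x : 'I_n -> R) : 'I_n -> R :=
  fun i => x ((s^-1)%g i).

Definition entries (R : realType) (n : nat) (X : 'M[R]_n) : 'I_(n * n) -> R :=
  fun k => mxvec X 0 k.

(* Main.v *)
Require Import Defs.
From HB Require Import structures.
From mathcomp Require Import all_boot all_order all_algebra all_fingroup.
From mathcomp Require Import mpoly.
From mathcomp Require Import reals.
From mathcomp Require complex.
From mathcomp Require Import lra.
From Stdlib Require Import FunctionalExtensionality.
Import Order.TTheory GRing.Theory Num.Theory.
Local Open Scope ring_scope.

Module Spec.
Import complex.
Local Open Scope complex_scope.

Lemma real_eig (R : realType) n (X : 'M[R]_n) {z : R[i]} :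
  X^T = X -> root (char_poly (map_mx (real_complex R) X)) z -> z = (Re z)%:C.
Proof.
move=> hX; rewrite -eigenvalue_root_char => /eigenvalueP [v hv v0].
set Xc := map_mx (real_complex R) X in hv.
set w := map_mx conjc v.
have hXc : map_mx conjc Xc = Xc by apply/matrixP=> i j; rewrite !mxE conjc_real.
have hXT : Xc^T = Xc.
  apply/matrixP=> i j; rewrite !mxE; congr (_ %:C).
  by have := congr1 (fun M : 'M[R]_n => M j i) hX; rewrite mxE.
have hw : w *m Xc = z^* *: w by rewrite -{1}hXc -map_mxM hv map_mxZ.
have k1 : v *m Xc *m w^T = z *: (v *m w^T) by rewrite hv -scalemxAl.
have k2 : v *m Xc *m w^T = z^* *: (v *m w^T).
  by rewrite -mulmxA -{1}hXT -trmx_mul hw linearZ /= scalemxAr.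
set s := (v *m w^T) 0 0.
have e : z * s = z^* * s.
  have := congr1 (fun M : 'M[R[i]]_1 => M 0 0) (etrans (esym k1) k2).
  by rewrite /= mxE [X in _ = X -> _]mxE.
have s0 : s != 0.
  rewrite /s !mxE psumr_eq0; last by move=> j _; rewrite !mxE mulcJ_ge0.
  apply: contra v0 => /allP H; apply/eqP/matrixP=> i j.
  rewrite (ord1 i) mxE; have := H j (mem_index_enum _).
  by rewrite !mxE mulf_eq0 conjc_eq0 orbb => /eqP.
move: e => /(mulIf s0); clear -R; case: z => a b /= [] hb.
have -> : b = 0 by lra.
by [].
Qed.

Lemma spec_exists (R : realType) n (X : 'M[R]_n) :
  X^T = X -> exists l : 'I_n -> R, is_eigvals X l.
Proof.
move=> hX.
have [r hr] := closed_field_poly_normal (char_poly (map_mx (real_complex R) X)).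
rewrite (monicP (char_poly_monic _)) scale1r in hr.
have real_r z : z \in r -> z = (Re z)%:C.
  move=> zr; apply: (@real_eig R n X z hX); by rewrite hr root_prod_XsubC.
set s := [seq Re z | z <- r].
have hc : char_poly X = \prod_(x <- s) ('X - x%:P).
  apply: (map_poly_inj (real_complex R)).
  rewrite map_char_poly hr rmorph_prod big_map; apply: eq_big_seq => z zr.
  by rewrite rmorphB /= map_polyX map_polyC /= -real_r.
have sz : size s = n.
  by have := size_char_poly X; rewrite hc size_prod_XsubC => -[].
set t := sort (fun x y => y <= x) s.
have szt : size t = n by rewrite size_sort.
exists (fun i => nth 0 t i); split.
  rewrite hc (perm_big t); last by rewrite perm_sym /t perm_sort.
  rewrite (big_nth 0) szt big_mkord.
  by [].
move=> i j ij.
have tr : transitive (fun x y : R => y <= x) by move=> a b c h1 h2; exact: le_trans h2 h1.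
have st : sorted (fun x y : R => y <= x) t.
  by apply: sort_sorted => x y; exact: le_total.
apply: (sorted_leq_nth tr (fun x => lexx x) 0 st) => //; rewrite inE szt //.
Qed.

End Spec.

From Stdlib Require Import ClassicalEpsilon.

Lemma eigvalsP (R : realType) n (X : 'M[R]_n) : symmx X -> is_eigvals X (eigvals X).
Proof.
move=> hX; rewrite /eigvals; apply: epsilon_spec; exact: Spec.spec_exists.
Qed.

Definition genmx (R : realType) n : 'M[{mpoly R[n * n]}]_n :=
  \matrix_(i < n, j < n) 'X_(mxvec_index i j).

Lemma cpE (R : realType) n (X : 'M[R]_n) k :
  ((char_poly (genmx R n))`_k).@[entries X] = (char_poly X)`_k.
Proof.
have hG : map_mx (meval (entries X)) (genmx R n) = X.
  by apply/matrixP=> i j; rewrite !mxE mevalXU /entries mxvecE.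
by rewrite -{2}hG -map_char_poly coef_map.
Qed.

Lemma meval_msym (R : realType) n (s : 'S_n) (p : {mpoly R[n]}) (x : 'I_n -> R) :
  (msym s p).@[x] = p.@[fun i => x (s i)].
Proof.
have -> : msym s p = comp_mpoly [tuple 'X_(s i) | i < n] p.
  rewrite /msym /comp_mpoly; congr mmap.
  by apply: functional_extensionality => i; rewrite tnth_mktuple.
rewrite comp_mpoly_meval; apply: meval_eq => i.
by rewrite tnth_mktuple mevalXU.
Qed.

Theorem proposition1p1 (R : realType) (n : nat) (p : {mpoly R[n]}) :
  (forall (s : 'S_n) (x : 'I_n -> R),
      p.@[perm_act s x] = 0 <-> p.@[x] = 0) ->
  exists q : {mpoly R[n * n]},
    forall X : 'M[R]_n, symmx X ->
      (q.@[entries X] = 0 <-> p.@[eigvals X] = 0).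
Proof.
move=> Hp.
set P := \prod_(s : 'S_n) msym s p.
have symP : P \is symmetric.
  apply/issymP => s; rewrite /P rmorph_prod /=.
  rewrite [RHS](reindex_inj (mulIg s)) /=.
  by apply: eq_bigr => t _; rewrite msymMm.
have [t [ht _]] := sym_fundamental symP.
set T := [tuple ((-1) ^+ i.+1 * (char_poly (genmx R n))`_(n - i.+1)) | i < n].
exists (comp_mpoly T t) => X hX.
have [hc hmono] := @eigvalsP R n X hX.
set l := eigvals X in hc hmono *.
have key : (comp_mpoly T t).@[entries X] = P.@[l].
  rewrite comp_mpoly_meval -ht comp_mpoly_meval; apply: meval_eq => i.
  rewrite !tnth_mktuple rmorphM rmorphXn rmorphN1 /= cpE.
  have := mroots_coeff [tuple l i | i < n] (inord i.+1).
  rewrite big_tuple (eq_bigr (fun j => 'X - (l j)%:P)); last first.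
    by move=> j _; rewrite tnth_mktuple.
  rewrite -hc inordK; last by rewrite ltnS.
  move=> ->; rewrite mulrA -exprMn mulrNN mulr1 expr1n mul1r.
  by apply: meval_eq => j; rewrite tnth_mktuple.
rewrite key /P rmorph_prod /=; split.
  move/eqP/prodf_eq0 => [s _ /eqP].
  rewrite meval_msym => h; apply/(Hp (s^-1)%g); rewrite -h; apply: meval_eq => i.
  by rewrite /perm_act invgK.
move=> h; apply/eqP/prodf_eq0; exists 1%g => //.
rewrite meval_msym; apply/eqP; rewrite -h; apply: meval_eq => i.
by rewrite perm1.
Qed.
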